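(* Let $A\in\mathbb{C}^{2n\times 2n}$ be a normal perskew-Hermitian matrix all of whose eigenvalues have nonzero real parts. Then there exist a unitary perplectic matrix $U\in\mathbb{C}^{2n\times 2n}$ and a diagonal matrix $D\in\mathbb{C}^{n\times n}$ such that $$A=U\begin{bmatrix} D & 0\\ 0 & -F_nD^HF_n\end{bmatrix}U^H .$$
   Context: For $m\ge1$, $F_m\in\mathbb{R}^{m\times m}$ denotes the flip (exchange) matrix with ones on the antidiagonal and zeros elsewhere. A matrix $A\in\mathbb{C}^{2n\times 2n}$ is per-Hermitian if $(F_{2n}A)^H=F_{2n}A$ and perskew-Hermitian if $(F_{2n}A)^H=-F_{2n}A$. A matrix $Z\in\mathbb{C}^{2n\times 2n}$ is perplectic if $Z^HF_{2n}Z=F_{2n}$; ''unitary perplectic'' means both unitary and perplectic. *)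

(* Defs.v *)
(* Complex numbers: an arbitrary numClosedFieldType C
   (algebraically closed field with conjugation, real part 'Re); the
   conjugate transpose is mathcomp's  M ^t*  (spectral.v / sesquilinear.v),
   unitary/normal matrices are mathcomp's  unitarymx / normalmx. *)
From HB Require Import structures.
From mathcomp Require Import all_boot all_order all_algebra.
Set Implicit Arguments. Unset Strict Implicit. Unset Printing Implicit Defensive.
Import Order.TTheory GRing.Theory Num.Theory.
Local Open Scope ring_scope.
Local Open Scope sesquilinear_scope.

Definition flipmx (C : nzRingType) (m : nat) : 'M[C]_m :=
  \matrix_(i < m, j < m) ((i + j == m.-1)%N)%:R.

Definition perskew_hermitian (C : numClosedFieldType) (m : nat) (A : 'M[C]_m) : Prop :=
  (flipmx C m *m A) ^t* = - (flipmx C m *m A).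

Definition perplecticmx (C : numClosedFieldType) (m : nat) (Z : 'M[C]_m) : Prop :=
  Z ^t* *m flipmx C m *m Z = flipmx C m.

(* Main.v *)
Require Import Defs.
From HB Require Import structures.
From mathcomp Require Import all_boot all_order all_algebra.
From mathcomp Require Import zify.
Import Order.TTheory GRing.Theory Num.Theory.
Local Open Scope ring_scope.
Local Open Scope sesquilinear_scope.

Section Helpers.
Variable C : numClosedFieldType.

Lemma tcM m k p (X : 'M[C]_(m, k)) (Y : 'M[C]_(k, p)) :
  (X *m Y) ^t* = Y ^t* *m X ^t*.
Proof. by rewrite trmx_mul map_mxM. Qed.

Lemma tcN m k (X : 'M[C]_(m, k)) : (- X) ^t* = - X ^t*.
Proof. by rewrite linearN /= map_mxN. Qed.

Lemma flip_tc m : (flipmx C m) ^t* = flipmx C m.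
Proof.
apply/matrixP => i j; rewrite !mxE conjC_nat addnC //.
Qed.

Lemma flipK m : flipmx C m *m flipmx C m = 1%:M.
Proof.
apply/matrixP => i j; rewrite !mxE.
have hi : (m - i.+1 < m)%N by case: i => i /= Hi; lia.
rewrite (bigD1 (Ordinal hi)) //= big1 ?addr0.
  rewrite !mxE /=.
  case: (eqVneq i j) => [->|nij].
    have -> : (j + (m - j.+1) == m.-1)%N by case: j {hi} => j /= Hj; apply/eqP; lia.
    have -> : (m - j.+1 + j == m.-1)%N by case: j {hi} => j /= Hj; apply/eqP; lia.
    by rewrite mulr1.
  have -> : (m - i.+1 + j == m.-1)%N = false.
    apply/negbTE; move: nij; case: i {hi} => i Hi; case: j => j Hj /=.
    move/eqP=> nij; apply/eqP => E; apply: nij; apply/val_inj => /=; lia.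
  by rewrite mulr0.
move=> k /eqP nk; rewrite !mxE.
have -> : (i + k == m.-1)%N = false.
  apply/negbTE/eqP => E; apply: nk; apply/val_inj => /=.
  case: i E {hi} => i Hi; case: k => k Hk /= E; lia.
by rewrite mul0r.
Qed.

Lemma flip_block n : flipmx C (n + n) = block_mx 0 (flipmx C n) (flipmx C n) 0.
Proof.
apply/matrixP => i j.
rewrite -[i]splitK -[j]splitK; case: (split i) => i'; case: (split j) => j';
  rewrite ?block_mxEul ?block_mxEur ?block_mxEdl ?block_mxEdr !mxE /=.
- have -> : (i' + j' == (n + n).-1)%N = false.
    by apply/negbTE/eqP; case: i' => ? ?; case: j' => ? ? /=; lia.
  by [].
- congr (_%:R); apply/eqP/eqP; case: i' => ? ?; case: j' => ? ? /=; lia.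
- congr (_%:R); apply/eqP/eqP; case: i' => ? ?; case: j' => ? ? /=; lia.
- have -> : (n + i' + (n + j') == (n + n).-1)%N = false.
    by apply/negbTE/eqP; case: i' => ? ?; case: j' => ? ? /=; lia.
  by [].
Qed.

Lemma sign_lemma (x y : C) : x \is Num.real -> y \is Num.real ->
  x != 0 -> y != 0 -> x = - y -> (0 < x) = ~~ (0 < y).
Proof.
move=> rx ry nx ny ->.
rewrite oppr_gt0.
case: (real_ltgt0P ry) => // E.
by move: ny; rewrite E eqxx.
Qed.

Definition selmx {m k} (s : 'I_k -> 'I_m) : 'M[C]_(m, k) :=
  \matrix_(r, j) (r == s j)%:R.

Lemma mul_sel p m k (M : 'M[C]_(p, m)) (s : 'I_k -> 'I_m) :
  M *m selmx s = \matrix_(i, j) M i (s j).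
Proof.
apply/matrixP => i j; rewrite !mxE (bigD1 (s j)) //= big1 ?addr0.
  by rewrite mxE eqxx mulr1.
by move=> r /negbTE nr; rewrite mxE nr mulr0.
Qed.

Lemma sel_tc_mul p m k (M : 'M[C]_(m, p)) (s : 'I_k -> 'I_m) :
  (selmx s) ^t* *m M = \matrix_(i, j) M (s i) j.
Proof.
apply/matrixP => i j; rewrite !mxE (bigD1 (s i)) //= big1 ?addr0.
  by rewrite !mxE eqxx conjC1 mul1r.
by move=> r /negbTE nr; rewrite !mxE nr conjC0 mul0r.
Qed.

Lemma diag_sel m k (d : 'rV[C]_m) (s : 'I_k -> 'I_m) :
  diag_mx d *m selmx s = selmx s *m diag_mx (\row_j d 0 (s j)).
Proof.
apply/matrixP => i j; rewrite mul_diag_mx mul_mx_diag !mxE.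
by case: eqP => [->|_]; rewrite ?mulr1 ?mul1r ?mulr0 ?mul0r.
Qed.

End Helpers.
Arguments selmx {C m k}.

Theorem lemma2p6 (C : numClosedFieldType) (n : nat) (A : 'M[C]_(n + n))
  (hnorm : A \is normalmx) (hpsk : perskew_hermitian A)
  (heig : forall a : C, eigenvalue A a -> 'Re a != 0) :
  exists (U : 'M[C]_(n + n)) (D : 'M[C]_n),
    [/\ U \is unitarymx, perplecticmx U, is_diag_mx D &
        A = U *m block_mx D 0 0 (- (flipmx C n *m D ^t* *m flipmx C n)) *m U ^t*].
Proof.
set P := spectralmx A; set d := spectral_diag A.
have AE : A = P ^t* *m diag_mx d *m P.
  by rewrite -invmx_unitary ?spectral_unitarymx //; apply/orthomx_spectralP.
have Pu : P \is unitarymx := spectral_unitarymx A.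
have PPt : P *m P ^t* = 1%:M by apply/unitarymxP.
have PtP : P ^t* *m P = 1%:M by apply: mulmx1C.
set F := flipmx C (n + n); set Fn := flipmx C n.
have FF : F *m F = 1%:M by apply: flipK.
have FnFn : Fn *m Fn = 1%:M by apply: flipK.
have Ft : F ^t* = F by apply: flip_tc.
have Fnt : Fn ^t* = Fn by apply: flip_tc.
have Ah : A ^t* = - (F *m A *m F).
  have := hpsk; rewrite /perskew_hermitian -/F tcM Ft => /(congr1 (mulmx^~ F)).
  by move=> H; rewrite -mulNmx -H -mulmxA FF mulmx1.
set Dl := diag_mx d.
have Dlt : Dl ^t* = diag_mx (map_mx (@Num.conj C) d) by rewrite /Dl tr_diag_mx map_diag_mx.
have AhE : A ^t* = P ^t* *m Dl ^t* *m P by rewrite AE !tcM trmxCK mulmxA.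
set Z := P *m F *m P ^t*.
have ZZ : Z *m Z = 1%:M.
  by rewrite /Z !mulmxA -(mulmxA _ _ P) PtP mulmx1 -(mulmxA P) FF mulmx1.
have PAPt : P *m A *m P ^t* = Dl.
  by rewrite AE !mulmxA PPt mul1mx -mulmxA PPt mulmx1.
have Zrel : Dl ^t* *m Z = - (Z *m Dl).
  have E1 : Dl ^t* = P *m A ^t* *m P ^t*.
    by rewrite AhE !mulmxA PPt mul1mx -mulmxA PPt mulmx1.
  have E2 : Dl ^t* = - (Z *m Dl *m Z).
    rewrite E1 Ah mulmxN mulNmx; congr (- _).
    rewrite -PAPt /Z !mulmxA -(mulmxA _ _ P) PtP mulmx1.
    by rewrite -(mulmxA _ (P^t*) P) PtP mulmx1.
  by rewrite E2 mulNmx -[in RHS](mulmx1 (Z *m Dl)) -ZZ !mulmxA.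
have Zent : forall i j, (d 0 i)^* * Z i j = - (Z i j * d 0 j).
  move=> i j; move/matrixP/(_ i j): Zrel.
  by rewrite Dlt mul_diag_mx /Dl mul_mx_diag !mxE.
have eig : forall k, 'Re (d 0 k) != 0.
  move=> k; apply: heig; apply/eigenvalueP; exists (row k P).
    rewrite -row_mul.
    have -> : P *m A = Dl *m P by rewrite AE !mulmxA PPt mul1mx.
    by rewrite /Dl mul_diag_mx; apply/rowP => j; rewrite !mxE.
  apply/negP => /eqP H.
  have : row k (P *m P ^t*) = 0 by rewrite row_mul H mul0mx.
  rewrite PPt => /rowP/(_ k); rewrite !mxE eqxx /= => /eqP.
  by rewrite oner_eq0.
set S := [set k | 0 < 'Re (d 0 k)].
have Zzero : forall i j, (i \in S) = (j \in S) -> Z i j = 0.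
  move=> i j; rewrite !inE => hij; apply/eqP/negPn/negP => nz.
  have : ((d 0 i)^* + d 0 j) * Z i j = 0.
    by rewrite mulrDl Zent [d 0 j * _]mulrC addNr.
  move/eqP; rewrite mulf_eq0 (negbTE nz) orbF addr_eq0 => /eqP E.
  have ER : 'Re (d 0 i) = - 'Re (d 0 j) by rewrite -Re_conj E raddfN.
  move: hij; rewrite (@sign_lemma C _ _ (Creal_Re _) (Creal_Re _) (eig i) (eig j) ER).
  by case: (0 < 'Re (d 0 j)).
have key : forall T : {set 'I_(n + n)},
    (forall i j, (i \in T) = (j \in T) -> Z i j = 0) ->
    (#|T|%:R : C) = \sum_(i in T) \sum_(j in ~: T) Z i j * Z j i.
  move=> T hT; rewrite -sumr_const; apply: eq_bigr => i iT.
  have <- : (Z *m Z) i i = 1 by rewrite ZZ mxE eqxx.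
  rewrite mxE (bigID (mem T)) /= big1 ?add0r.
    by apply: eq_bigl => j; rewrite in_setC.
  by move=> j jT; rewrite hT ?mul0r // iT jT.
have cardS : #|S| = n.
  have hS := key S Zzero.
  have hSc := key (~: S).
  rewrite setCK in hSc.
  have := hSc ltac:(by move=> i j; rewrite !in_setC => /(congr1 negb); rewrite !negbK => /Zzero).
  rewrite exchange_big /=.
  under eq_bigr do under eq_bigr do rewrite mulrC.
  rewrite -hS => /eqP.
  rewrite eqr_nat => /eqP E.
  have H := cardsC S; rewrite card_ord E in H.
  by move: #|S| H => k H; lia.
pose s : 'I_n -> 'I_(n + n) := fun j => enum_val (cast_ord (esym cardS) j).
have sS : forall j, s j \in S by move=> j; apply: enum_valP.
have sinj : injective s by move=> a b /enum_val_inj /cast_ord_inj.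
have Ya : (P ^t* *m selmx s) ^t* *m (P ^t* *m selmx s) = 1%:M.
  rewrite tcM trmxCK mulmxA -(mulmxA _ P) PPt mulmx1 sel_tc_mul.
  by apply/matrixP => i j; rewrite !mxE (inj_eq sinj).
have Yb : (P ^t* *m selmx s) ^t* *m F *m (P ^t* *m selmx s) = 0.
  have -> : (P ^t* *m selmx s) ^t* *m F *m (P ^t* *m selmx s)
      = (selmx s) ^t* *m (Z *m selmx s) by rewrite tcM trmxCK /Z !mulmxA.
  rewrite mul_sel sel_tc_mul; apply/matrixP => i j.
  by rewrite 2!mxE Zzero ?mxE // !sS.
have Yc : A *m (P ^t* *m selmx s) = (P ^t* *m selmx s) *m diag_mx (\row_j d 0 (s j)).
  rewrite AE !mulmxA -(mulmxA _ P) PPt mulmx1 -mulmxA diag_sel.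
  by rewrite mulmxA.
have Yd : A ^t* *m (P ^t* *m selmx s) =
    (P ^t* *m selmx s) *m (diag_mx (\row_j d 0 (s j))) ^t*.
  rewrite AhE !mulmxA -(mulmxA _ P) PPt mulmx1 -mulmxA Dlt diag_sel mulmxA.
  rewrite tr_diag_mx map_diag_mx; congr (_ *m diag_mx _).
  by apply/rowP => j; rewrite !mxE.
have hDd : is_diag_mx (diag_mx (\row_j d 0 (s j))) by apply: diag_mx_is_diag.
move: Ya Yb Yc Yd hDd.
move: (P ^t* *m selmx s) (diag_mx (\row_j d 0 (s j))) => Y Dd Ya Yb Yc Yd hDd.
have AF : A *m F = - (F *m A ^t*).
  by rewrite Ah mulmxN !mulmxA FF mul1mx opprK.
pose U := row_mx Y (F *m Y *m Fn).
have UtE : U ^t* = col_mx (Y ^t*) (Fn *m Y ^t* *m F).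
  by rewrite /U tr_row_mx map_col_mx !tcM Ft Fnt mulmxA.
have UtU : U ^t* *m U = 1%:M.
  rewrite UtE mul_col_row.
  have -> : Y ^t* *m (F *m Y *m Fn) = (Y ^t* *m F *m Y) *m Fn by rewrite !mulmxA.
  have -> : Fn *m Y ^t* *m F *m Y = Fn *m (Y ^t* *m F *m Y) by rewrite !mulmxA.
  have -> : Fn *m Y ^t* *m F *m (F *m Y *m Fn) = Fn *m (Y ^t* *m (F *m F) *m Y) *m Fn
    by rewrite !mulmxA.
  by rewrite Yb mul0mx mulmx0 FF mulmx1 Ya mulmx1 FnFn -scalar_mx_block.
have UUt : U *m U ^t* = 1%:M by apply: mulmx1C.
exists U, Dd; split => //.
- by apply/unitarymxP.
- rewrite /perplecticmx -/F UtE mul_col_mx mul_col_row.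
  have -> : Y ^t* *m F *m (F *m Y *m Fn) = (Y ^t* *m (F *m F) *m Y) *m Fn by rewrite !mulmxA.
  have -> : Fn *m Y ^t* *m F *m F *m Y = Fn *m (Y ^t* *m (F *m F) *m Y) by rewrite !mulmxA.
  have -> : Fn *m Y ^t* *m F *m F *m (F *m Y *m Fn) = Fn *m (Y ^t* *m F *m Y) *m (Fn)
    by rewrite !mulmxA -(mulmxA _ F F) FF mulmx1.
  by rewrite Yb FF mulmx1 Ya mul1mx mulmx1 mulmx0 mul0mx /F flip_block.
- have AU : A *m U = U *m block_mx Dd 0 0 (- (Fn *m Dd ^t* *m Fn)).
    rewrite /U mul_mx_row mul_row_block !mulmx0 addr0 add0r mulmxN.
    rewrite Yc !mulmxA AF mulNmx -(mulmxA F (A ^t*) Y) Yd mulNmx.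
    by rewrite !mulmxA -(mulmxA _ Fn Fn) FnFn mulmx1.
  by rewrite -AU -mulmxA UUt mulmx1.
Qed.
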